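(* Let $H$ be a fixed connected graph, $\{G_n\}$ a sequence of graphs with $N(H,G_n)>0$, and $p_n\in(0,1)$ with $\limsup_np_n<1$. Then: (a) There is a constant $c=c_H>0$ such that $\mathbb P(T(H,G_n)=0)\ge e^{-cp_n^{|V(H)|}N(H,G_n)}$ for all $n$ large enough. (b) If $\liminf_{n\to\infty}\mathbb P(T(H,G_n)=0)>0$, then $\hat N(H,G_n)$ is not consistent for $N(H,G_n)$ and $Z(H,G_n)$ is not asymptotically normal.
   Context: $G_n$ is a simple labeled graph on $V(G_n)=\{1,\dots,|V(G_n)|\}$ with adjacency $(a_{ij})$; $H=(V(H),E(H))$ with $|Aut(H)|$ automorphisms. $V(G_n)_k$ is the set of $k$-tuples of distinct vertices. $M_H(\mathbf s)=\prod_{(i,j)\in E(H)}a_{s_is_j}$, $N(H,G_n)=\frac1{|Aut(H)|}\sum_{\mathbf s\in V(G_n)_{|V(H)|}}M_H(\mathbf s)$. $\{X_v\}$ i.i.d. Bernoulli$(p_n)$, $X_{\mathbf s}=\prod_uX_{s_u}$, $T(H,G_n)=\frac1{|Aut(H)|}\sum_{\mathbf s}M_H(\mathbf s)X_{\mathbf s}$, $\hat N(H,G_n)=p_n^{-|V(H)|}T(H,G_n)$, $Z(H,G_n)=(T(H,G_n)-p_n^{|V(H)|}N(H,G_n))/\sqrt{\mathrm{Var}[T(H,G_n)]}$. Consistency: $\hat N/N\to1$ in probability; asymptotic normality: $Z\to N(0,1)$ in distribution. *)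

(* Defs.v *)
From HB Require Import structures.
From mathcomp Require Import all_boot all_order all_algebra all_fingroup.
From mathcomp Require Import all_classical all_reals all_analysis.
Set Implicit Arguments.
Unset Strict Implicit.
Unset Printing Implicit Defensive.
Import Order.TTheory GRing.Theory Num.Theory.
Import numFieldTopology.Exports numFieldNormedType.Exports.
Local Open Scope classical_set_scope.
Local Open Scope ring_scope.

(* A simple graph on the vertex set 'I_k (= {0,...,k-1}, relabelling of
   {1,...,k}): a symmetric irreflexive boolean adjacency relation. *)
Definition simple_graph (k : nat) (E : rel 'I_k) : Prop :=
  irreflexive E /\ symmetric E.

Definition connected_graph (k : nat) (E : rel 'I_k) : Prop :=
  (0 < k)%N /\ forall i j : 'I_k, connect E i j.

Definition autH (k : nat) (H : rel 'I_k) : nat :=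
  #|[set s : {perm 'I_k} | [forall i, [forall j, H (s i) (s j) == H i j]]]|.

Definition inj_tuples (k m : nat) : {set {ffun 'I_k -> 'I_m}} :=
  [set s : {ffun 'I_k -> 'I_m} | injectiveb s].

Definition MH (R : realType) (k m : nat) (H : rel 'I_k) (G : rel 'I_m)
    (s : {ffun 'I_k -> 'I_m}) : R :=
  \prod_(ij : 'I_k * 'I_k | H ij.1 ij.2) ((G (s ij.1) (s ij.2) : nat)%:R).

Definition Ncount (R : realType) (k m : nat) (H : rel 'I_k) (G : rel 'I_m) : R :=
  ((autH H)%:R)^-1 * \sum_(s in inj_tuples k m) MH R H G s.

(* Sample space: the set w of vertices v with X_v = 1. *)
Definition Tcount (R : realType) (k m : nat) (H : rel 'I_k) (G : rel 'I_m)
    (w : {set 'I_m}) : R :=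
  ((autH H)%:R)^-1 *
    \sum_(s in inj_tuples k m) (MH R H G s * \prod_(u : 'I_k) ((s u \in w) : nat)%:R).

(* Law of i.i.d. Bernoulli(p) variables {X_v}_{v in V(G)} :
   P(X = 1_w) = p^|w| (1-p)^(m-|w|). *)
Definition bern_weight (R : realType) (m : nat) (p : R) (w : {set 'I_m}) : R :=
  p ^+ #|w| * (1 - p) ^+ (m - #|w|).

Definition Prob (R : realType) (m : nat) (p : R) (E : pred {set 'I_m}) : R :=
  \sum_(w : {set 'I_m} | E w) bern_weight p w.

Definition Expect (R : realType) (m : nat) (p : R) (X : {set 'I_m} -> R) : R :=
  \sum_(w : {set 'I_m}) bern_weight p w * X w.

Definition Variance (R : realType) (m : nat) (p : R) (X : {set 'I_m} -> R) : R :=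
  Expect p (fun w => (X w - Expect p X) ^+ 2).

Definition Nhat (R : realType) (k m : nat) (H : rel 'I_k) (G : rel 'I_m) (p : R)
    (w : {set 'I_m}) : R :=
  (p ^+ k)^-1 * Tcount R H G w.

Definition Zstat (R : realType) (k m : nat) (H : rel 'I_k) (G : rel 'I_m) (p : R)
    (w : {set 'I_m}) : R :=
  (Tcount R H G w - p ^+ k * Ncount R H G) / Num.sqrt (Variance p (Tcount R H G)).

Definition Phi (R : realType) (x : R) : R :=
  fine (normal_prob (0:R) 1 `]-oo, x]).

Definition consistent (R : realType) (k : nat) (H : rel 'I_k) (m : nat -> nat)
    (G : forall n, rel 'I_(m n)) (p : nat -> R) : Prop :=
  forall e : R, 0 < e ->
    (fun n => Prob (p n) (fun w => e < `| Nhat H (G n) (p n) w / Ncount R H (G n) - 1 |))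
      @ \oo --> (0 : R).

(* Asymptotic normality: Z -> N(0,1) in distribution (cdf convergence at
   every point; Phi is continuous). *)
Definition asymp_normal (R : realType) (k : nat) (H : rel 'I_k) (m : nat -> nat)
    (G : forall n, rel 'I_(m n)) (p : nat -> R) : Prop :=
  forall x : R,
    (fun n => Prob (p n) (fun w => Zstat H (G n) (p n) w <= x)) @ \oo --> Phi x.

(* Main.v *)
Require Import Defs.
Set Warnings "-all".
From HB Require Import structures.
From mathcomp Require Import all_boot all_order all_algebra all_fingroup.
From mathcomp Require Import all_classical all_reals all_analysis.
From mathcomp Require Import ring lra measurable_realfun.
Import Order.TTheory GRing.Theory Num.Theory.
Import numFieldTopology.Exports numFieldNormedType.Exports.
Local Open Scope classical_set_scope.
Local Open Scope ring_scope.
Section Bern.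
Variables (R : realType) (m : nat) (p : R).
Hypotheses (p0 : 0 <= p) (p1 : p <= 1).

Lemma bw_ge0 (w : {set 'I_m}) : 0 <= bern_weight p w.
Proof. by rewrite /bern_weight mulr_ge0 // exprn_ge0 // subr_ge0. Qed.

Lemma Prob_ge0 (E : pred {set 'I_m}) : 0 <= Prob p E.
Proof. by rewrite /Prob sumr_ge0 // => w _; apply: bw_ge0. Qed.

Lemma Prob_le (E F : pred {set 'I_m}) : (forall w, E w -> F w) -> Prob p E <= Prob p F.
Proof.
move=> EF; rewrite /Prob [X in _ <= X](bigID E) /=.
rewrite (eq_bigl E); last by move=> w; case: (boolP (E w)) => [/EF ->|]; rewrite ?andbF.
by rewrite lerDl sumr_ge0 // => w _; apply: bw_ge0.
Qed.

Lemma Prob_split (E X : pred {set 'I_m}) :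
  Prob p E = Prob p (fun w => E w && X w) + Prob p (fun w => E w && ~~ X w).
Proof. by rewrite /Prob (bigID X). Qed.

Lemma Prob_ext (E F : pred {set 'I_m}) : (forall w, E w = F w) -> Prob p E = Prob p F.
Proof. by move=> EF; rewrite /Prob (eq_bigl F). Qed.

Lemma Prob_total : Prob p (fun _ : {set 'I_m} => true) = 1.
Proof.
have cw : forall w : {set 'I_m}, (#|w| < m.+1)%N.
  by move=> w; rewrite ltnS -[X in (_ <= X)%N](card_ord m) max_card.
rewrite /Prob /bern_weight.
rewrite (partition_big (fun w : {set 'I_m} => (inord #|w| : 'I_m.+1)) xpredT) //=.
have E : (1 - p + p) ^+ m = 1 by rewrite subrK expr1n.
apply: (etrans _ E); rewrite exprDn; apply: eq_bigr => j _.
rewrite (eq_bigr (fun _ => p ^+ j * (1 - p) ^+ (m - j))); last first.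
  by move=> w /= /eqP <-; rewrite inordK.
rewrite sumr_const mulrC; congr (_ *+ _).
rewrite -[X in 'C(X, _)](card_ord m) -card_draws; apply: eq_card => w; rewrite !inE.
by rewrite unfold_in /= inordK.
Qed.

Lemma bw_add (v : 'I_m) (w : {set 'I_m}) : v \notin w ->
  bern_weight p (v |: w) * (1 - p) = p * bern_weight p w.
Proof.
move=> vw; rewrite /bern_weight cardsU1 vw /= add1n.
have lt : (#|w| < m)%N.
  have := max_card (v |: w); rewrite cardsU1 vw card_ord add1n; exact.
have -> : (m - #|w| = (m - #|w|.+1).+1)%N by rewrite subnSK.
by rewrite exprS exprSr; ring.
Qed.

Definition tog (v : 'I_m) (w : {set 'I_m}) := if v \in w then w :\ v else v |: w.

Lemma togK v : involutive (tog v).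
Proof.
move=> w; rewrite /tog; case: (boolP (v \in w)) => vw.
  rewrite !inE eqxx /=; apply/setP => x; rewrite !inE.
  by case: (eqVneq x v) => // ->.
rewrite !inE eqxx /=; apply/setP => x; rewrite !inE.
by case: (eqVneq x v) => // ->; rewrite (negbTE vw).
Qed.

Lemma setD1_notin (v : 'I_m) (w : {set 'I_m}) : v \notin w -> w :\ v = w.
Proof.
move=> vw; apply/setP => x; rewrite !inE; case: (eqVneq x v) => // ->.
by rewrite (negbTE vw).
Qed.

Lemma Prob_toggle (v : 'I_m) (E : pred {set 'I_m}) :
  (forall w, E (v |: w) = E (w :\ v)) ->
  Prob p (fun w => E w && (v \in w)) = p * Prob p E.
Proof.
move=> Einv.
set B := Prob p (fun w => E w && (v \in w)).
set A := Prob p (fun w => E w && ~~ (v \in w)).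
have PE : Prob p E = B + A by rewrite (Prob_split E (fun w => v \in w)).
have BA : B * (1 - p) = p * A.
  rewrite /B /A /Prob (reindex_inj (inv_inj (togK v))) /=.
  rewrite mulr_suml mulr_sumr big_mkcond [in RHS]big_mkcond /=; apply: eq_bigr => w _.
  rewrite /tog; case: (boolP (v \in w)) => vw.
    by rewrite !inE eqxx !andbF.
  rewrite setU11 andbT /= Einv setD1_notin //.
  by case: (E w) => //; rewrite bw_add.
rewrite PE; apply/eqP; rewrite -subr_eq0; apply/eqP.
have : B * (1 - p) - p * A = 0 by rewrite BA subrr.
by move=> H; rewrite -H; ring.
Qed.

Lemma sub_notin (S : {set 'I_m}) (v : 'I_m) (w : {set 'I_m}) : v \notin S ->
  ((S \subset v |: w) = (S \subset w)) /\ ((S \subset w :\ v) = (S \subset w)).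
Proof.
move=> vS; split; apply/idP/idP => /fintype.subsetP h; apply/fintype.subsetP => x xS; have := h x xS; rewrite !inE.
- by case: (eqVneq x v) => // xv; move: vS; rewrite -xv xS.
- by move=> ->; rewrite orbT.
- by case/andP.
- by move=> ->; rewrite andbT; apply/eqP => xv; move: vS; rewrite -xv xS.
Qed.

Lemma Prob_sub (S : {set 'I_m}) : Prob p (fun w => S \subset w) = p ^+ #|S|.
Proof.
move: {2}#|S| (erefl #|S|) => n; elim: n S => [|n IH] S cS.
  move/eqP: cS; rewrite cards_eq0 => /eqP ->.
  by rewrite cards0 expr0 -(Prob_total); apply: Prob_ext => w; rewrite finset.sub0set.
have : (0 < #|S|)%N by rewrite cS.
rewrite card_gt0 => /set0Pn [v vS].
have cS' : #|S :\ v| = n by move: cS; rewrite (cardsD1 v) vS add1n => -[].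
have vS' : v \notin S :\ v by rewrite !inE eqxx.
rewrite (Prob_ext _ (fun w => (S :\ v \subset w) && (v \in w))); last first.
  move=> w; rewrite -{1}(finset.setD1K vS) finset.subUset finset.sub1set andbC //.
rewrite Prob_toggle; last by move=> w; rewrite (proj1 (sub_notin _ _ w vS')) (proj2 (sub_notin _ _ w vS')).
by rewrite IH // cS cS' exprS.
Qed.

Lemma Prob_sub_dec (D : pred {set 'I_m}) (S : {set 'I_m}) :
  (forall w w' : {set 'I_m}, w \subset w' -> D w' -> D w) ->
  Prob p (fun w => D w && (S \subset w)) <= p ^+ #|S| * Prob p D.
Proof.
move: {2}#|S| (erefl #|S|) => n; elim: n S D => [|n IH] S D cS Ddec.
  move/eqP: cS; rewrite cards_eq0 => /eqP ->.
  by rewrite cards0 expr0 mul1r; apply: Prob_le => w /andP[].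
have : (0 < #|S|)%N by rewrite cS.
rewrite card_gt0 => /set0Pn [v vS].
have cS' : #|S :\ v| = n by move: cS; rewrite (cardsD1 v) vS add1n => -[].
have vS' : v \notin S :\ v by rewrite !inE eqxx.
pose Dv := fun w => D (v |: w).
rewrite (Prob_ext _ (fun w => (Dv w && (S :\ v \subset w)) && (v \in w))); last first.
  move=> w; rewrite /Dv -{1}(finset.setD1K vS) finset.subUset finset.sub1set.
  case: (boolP (v \in w)) => vw; last by rewrite !andbF.
  by rewrite (finset.setUidPr _) ?finset.sub1set // andbT.

rewrite Prob_toggle; last first.
  move=> w; rewrite (proj1 (sub_notin _ _ w vS')) (proj2 (sub_notin _ _ w vS')) /Dv.
  congr (D _ && _); apply/setP => x; rewrite !inE; by case: (eqVneq x v).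
rewrite cS exprS -mulrA ler_wpM2l //.
apply: (le_trans (IH (S :\ v) Dv cS' _)).
  by move=> w w' ww' Dw'; apply: Ddec Dw'; apply: finset.setUS.
rewrite -cS' ler_wpM2l ?exprn_ge0 //; apply: Prob_le => w; apply: Ddec.
exact: finset.subsetUr.
Qed.

Lemma Prob_diff (X : {set 'I_m} -> R) (E : pred {set 'I_m}) (a b : R) : a <= b ->
  (forall w, E w -> a < X w <= b) ->
  Prob p E <= Prob p (fun w => X w <= b) - Prob p (fun w => X w <= a).
Proof.
move=> ab hE; rewrite (Prob_split (fun w => X w <= b) (fun w => X w <= a)).
rewrite (Prob_ext (fun w => (X w <= b) && (X w <= a)) (fun w => X w <= a)); last first.
  by move=> w; case: (boolP (X w <= a)) => h; rewrite ?andbF // andbT (le_trans h ab).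
rewrite [X in _ <= X](_ : _ = Prob p (fun w => (X w <= b) && ~~ (X w <= a))); last first.
  by rewrite addrC addKr.
apply: Prob_le => w /hE /andP [aw wb]; by rewrite wb -ltNge aw.
Qed.
End Bern.
Arguments Prob_ext {R m p} E F _.
Arguments Prob_split {R m p} E X.
Arguments Prob_total {R m p}.
Arguments Prob_le {R m p} _ _ E F _.
Arguments Prob_ge0 {R m p} _ _ E.
Arguments Prob_sub_dec {R m p} _ _ D S _.
Arguments Prob_sub {R m p} S.

Section Graph.
Variables (R : realType) (k : nat) (H : rel 'I_k) (m : nat) (G : rel 'I_m).

Definition imgs (s : {ffun 'I_k -> 'I_m}) : {set 'I_m} := [set s u | u : 'I_k].

Lemma MH01 (s : {ffun 'I_k -> 'I_m}) : MH R H G s = 0 \/ MH R H G s = 1.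
Proof.
rewrite /MH; apply: (big_ind (fun x : R => x = 0 \/ x = 1)).
- by right.
- by move=> x y [->|->] [->|->]; rewrite ?mul0r ?mulr0 ?mul1r; [left|left|left|right].
- by move=> ij _; case: (G _ _); [right|left].
Qed.

Lemma MH_ge0 (s : {ffun 'I_k -> 'I_m}) : 0 <= MH R H G s.
Proof. by case: (MH01 s) => ->. Qed.

Lemma prod_ind (s : {ffun 'I_k -> 'I_m}) (w : {set 'I_m}) :
  \prod_(u : 'I_k) (((s u \in w) : nat)%:R : R) = ((imgs s \subset w) : nat)%:R.
Proof.
case: (boolP (imgs s \subset w)) => sw.
  rewrite big1 // => u _; have : s u \in imgs s by apply/imsetP; exists u.
  by move/(fintype.subsetP sw) => ->.
have [u su] : exists u, s u \notin w.
  apply/existsP; move: sw; apply: contraR; rewrite negb_exists => /forallP h.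
  apply/fintype.subsetP => x /imsetP [u _ ->]; have := h u; by rewrite negbK.
by rewrite (bigD1 u) //= (negbTE su) mul0r.
Qed.

Lemma card_imgs (s : {ffun 'I_k -> 'I_m}) : s \in inj_tuples k m -> #|imgs s| = k.
Proof.
rewrite inE => /injectiveP inj; rewrite /imgs card_imset // card_ord //.
Qed.

Lemma autH_gt0 : (0 < autH H)%N.
Proof.
rewrite /autH; apply/card_gt0P; exists 1%g; rewrite inE.
by apply/forallP => i; apply/forallP => j; rewrite !perm1.
Qed.

Definition condT (s : {ffun 'I_k -> 'I_m}) (w : {set 'I_m}) := (MH R H G s == 0) || ~~ (imgs s \subset w).

Lemma condT_T0 w : (forall s, s \in inj_tuples k m -> condT s w) -> Tcount R H G w == 0.
Proof.
move=> h; rewrite /Tcount big1 ?mulr0 // => s si.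
rewrite prod_ind; case/orP: (h s si) => [/eqP ->|/negbTE ->]; by rewrite ?mul0r ?mulr0.
Qed.

Lemma condT_dec (s : {ffun 'I_k -> 'I_m}) (w w' : {set 'I_m}) : w \subset w' -> condT s w' -> condT s w.
Proof.
move=> ww'; rewrite /condT => /orP [->//|h]; apply/orP; right; apply: contra h.
by move=> h; apply: fintype.subset_trans ww'.
Qed.

Lemma ET (p : R) : 0 <= p -> p <= 1 ->
  Expect p (Tcount R H G) = p ^+ k * Ncount R H G.
Proof.
move=> p0 p1; rewrite /Expect /Tcount /Ncount.
under eq_bigr do rewrite mulrCA.
rewrite -mulr_sumr mulrCA; congr (_ * _).
rewrite mulr_sumr; under eq_bigr do rewrite mulr_sumr.
rewrite exchange_big /=; apply: eq_big => // s si.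
rewrite [X in _ = X * _](_ : p ^+ k = Prob p (fun w => imgs s \subset w)); last first.
  by rewrite Prob_sub // card_imgs.
rewrite /Prob mulr_suml [in RHS]big_mkcond /=.
apply: eq_bigr => w _; rewrite prod_ind.
by case: (imgs s \subset w); rewrite /= ?mulr1 ?mulr0 ?mul0r; ring.
Qed.


Lemma harris (p : R) : 0 <= p -> p <= 1 -> forall r : seq {ffun 'I_k -> 'I_m},
  all (fun s => s \in inj_tuples k m) r ->
  \prod_(s <- r) (1 - MH R H G s * p ^+ k) <= Prob p (fun w => all (fun s => condT s w) r).
Proof.
move=> p0 p1; elim=> [|s r IH] /=.
  by move=> _; rewrite big_nil -(@Prob_total R m p) le_refl.
case/andP=> si /IH {}IH; rewrite big_cons.
case: (MH01 s) => Ms.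
  rewrite Ms mul0r subr0 mul1r (le_trans IH) // le_eqVlt; apply/orP; left; apply/eqP.
  by apply: Prob_ext => w; rewrite /condT Ms eqxx.
have pk1 : 0 <= 1 - p ^+ k by rewrite subr_ge0; apply: exprn_ile1.
rewrite Ms mul1r (Prob_ext _ (fun w => all (fun s => condT s w) r && ~~ (imgs s \subset w))); last first.
  by move=> w; rewrite /condT Ms oner_eq0 /= andbC.
have := Prob_split (p:=p) (fun w => all (fun s => condT s w) r) (fun w => imgs s \subset w).
have := Prob_sub_dec p0 p1 (fun w => all (fun s => condT s w) r) (imgs s).
rewrite card_imgs // => h1 h2.
set P1 := Prob p _ in h1 h2 IH *.
set P2 := Prob p _ in h1 h2.
set P3 := Prob p _ in h2 *.
set q := p ^+ k in h1 pk1 *.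
apply: (le_trans (ler_wpM2l pk1 IH)).
have dec : forall w w' : {set 'I_m}, w \subset w' -> all (condT^~ w') r -> all (condT^~ w) r.
  by move=> w w' ww' /allP h; apply/allP => s' s'r; apply: condT_dec ww' (h s' s'r).
move/(_ dec) in h1; rewrite -/P2; nra.
Qed.

Lemma expR_bound (x y : R) : 0 <= x -> x <= y -> y < 1 -> expR (- (x / (1 - y))) <= 1 - x.
Proof.
move=> x0 xy y1; set a := x / (1 - y).
have y1' : 0 < 1 - y by rewrite subr_gt0.
have a0 : 0 <= a by rewrite /a divr_ge0 // ltW.
have ay : a * (1 - y) = x by rewrite /a divfK // gt_eqF.
have ea := expR_ge1Dx a.
have h1 : 0 <= (1 - x) * (expR a - 1 - a).
  apply: mulr_ge0; first by rewrite subr_ge0 (le_trans xy) // ltW.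
  by rewrite -addrA -opprD subr_ge0.
have h2 : 0 <= a * (y - x) by rewrite mulr_ge0 // subr_ge0.
rewrite expRN -[X in X <= _]mulr1 ler_pdivrMl ?expR_gt0 //.
nra.
Qed.

Lemma bound_a (p : R) : 0 <= p -> p ^+ k < 1 -> p <= 1 ->
  expR (- ((autH H)%:R * p ^+ k / (1 - p ^+ k) * Ncount R H G))
    <= Prob p (fun w => Tcount R H G w == 0).
Proof.
move=> p0 pk1 p1.
set r := enum (inj_tuples k m).
have rin : all (fun s => s \in inj_tuples k m) r by apply/allP => s; rewrite mem_enum.
have h := harris p p0 p1 r rin.
apply: le_trans (le_trans _ h) _; last first.
  apply: Prob_le => // w /allP h'; apply: condT_T0 => s si; apply: h'.
  by rewrite mem_enum.
set q := p ^+ k in pk1 h *.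
have q0 : 0 <= q by rewrite exprn_ge0.
have -> : - ((autH H)%:R * q / (1 - q) * Ncount R H G) =
    \sum_(s <- r) - (MH R H G s * q / (1 - q)).
  rewrite sumrN; congr (- _); rewrite /r big_enum /= -!mulr_suml /Ncount.
  have a0 : (autH H)%:R != 0 :> R by rewrite pnatr_eq0 -lt0n autH_gt0.
  have q1 : 1 - q != 0 by rewrite subr_eq0 eq_sym lt_eqF.
  by field; rewrite a0 q1.
rewrite expR_sum; apply: ler_prod => s _; rewrite expR_ge0 /=.
apply: expR_bound => //; first by rewrite mulr_ge0 // MH_ge0.
by case: (MH01 s) => ->; rewrite ?mul0r ?mul1r.
Qed.

Lemma zbound (p : R) : 0 <= p -> p <= 1 ->
  ((0 - p ^+ k * Ncount R H G) / Num.sqrt (Variance p (Tcount R H G))) ^+ 2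
    * Prob p (fun w => Tcount R H G w == 0) <= 1.
Proof.
move=> p0 p1.
set V := Variance p (Tcount R H G).
set c := p ^+ k * Ncount R H G.
set P0 := Prob p _.
have V0 : 0 <= V.
  by rewrite /V /Variance /Expect sumr_ge0 // => w _; rewrite mulr_ge0 ?bw_ge0 ?sqr_ge0.
have hV : P0 * c ^+ 2 <= V.
  rewrite /V /Variance ET // /Expect (bigID (fun w => Tcount R H G w == 0)) /=.
  apply: le_trans (_ : _ <= \sum_(w | Tcount R H G w == 0)
      bern_weight p w * (Tcount R H G w - c) ^+ 2) _; last first.
    by rewrite lerDl sumr_ge0 // => w _; rewrite mulr_ge0 ?bw_ge0 ?sqr_ge0.
  rewrite /P0 /Prob mulr_suml le_eqVlt; apply/orP; left; apply/eqP.
  by apply: eq_bigr => w /eqP ->; rewrite sub0r sqrrN.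
rewrite exprMn exprVn sqr_sqrtr // sub0r sqrrN -/c.
case: (eqVneq V 0) => [->|Vn0]; first by rewrite invr0 mulr0 mul0r ler01.
have Vp : 0 < V by rewrite lt_neqAle eq_sym Vn0 V0.
by rewrite mulrAC ler_pdivrMr // mul1r mulrC.
Qed.
End Graph.
Arguments Prob_le {R m p} _ _ E F _.
Arguments Prob_ge0 {R m p} _ _ E.
Arguments Prob_sub_dec {R m p} _ _ D S _.
Arguments Prob_sub {R m p} S.
Section PhiSec.
Variable R : realType.
Local Notation mu := (normal_prob (0:R) 1).

Lemma peak_le1 : normal_peak (1:R) <= 1.
Proof.
have h : 1 <= 1 ^+ 2 * pi *+ 2 :> R by rewrite expr1n mul1r mulr2n; have := pi_ge2 R; lra.
rewrite /normal_peak invf_le1.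
  by rewrite -[X in X <= _]sqrtr1 ler_sqrt // (le_trans ler01 h).
by rewrite sqrtr_gt0 (lt_le_trans ltr01 h).
Qed.

Lemma mu_ocitv (a b : R) : a <= b -> (mu `]a, b] <= ((b - a))%:E)%E.
Proof.
move=> ab; rewrite /normal_prob.
apply: (@le_trans _ _ (\int[lebesgue_measure]_(x in `]a, b]) (cst (normal_peak (1:R))%:E x))%E).
  apply: ge0_le_integral => //.
  - by move=> x _; rewrite lee_fin normal_pdf_ge0.
  - apply/measurable_EFinP; apply: measurable_funTS; exact: measurable_normal_pdf.
  - by move=> x _; rewrite lee_fin normal_pdf_ub // oner_neq0.
rewrite integral_cst // [X in (_ * X)%E]lebesgue_measure_itv /=.
case: ifPn => _; last by rewrite mule0 lee_fin subr_ge0.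
rewrite -EFinD -EFinM lee_fin -[leRHS]mul1r ler_wpM2r ?peak_le1 //.
by rewrite subr_ge0.
Qed.

Lemma Phi_lip (a b : R) : a <= b -> Phi b - Phi a <= b - a.
Proof.
move=> ab; rewrite /Phi.
have mB : measurable (`]-oo, b] : set R) by exact: measurable_itv.
have mA : measurable (`]-oo, a] : set R) by exact: measurable_itv.
have := measureDI mu mB mA.
have -> : [set` `]-oo, b]] `&` [set` `]-oo, a]] = [set` `]-oo, a]] :> set R.
  apply: setIidr => x /=; rewrite !in_itv /= => xa; exact: le_trans xa ab.
have -> : [set` `]-oo, b]] `\` [set` `]-oo, a]] = [set` `]a, b]] :> set R.
  apply/seteqP; split => x /=; rewrite !in_itv /=.
    by move=> [xb xa]; rewrite xb andbT ltNge; apply/negP.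
  by move=> /andP [ax xb]; split => //; apply/negP; rewrite -ltNge.
have f1 : mu `]a, b] \is a fin_num by apply: fin_num_measure; exact: measurable_itv.
have f2 : mu `]-oo, a] \is a fin_num by apply: fin_num_measure; exact: measurable_itv.
move=> ->; rewrite fineD // addrK.
by rewrite -lee_fin fineK //; apply: mu_ocitv.
Qed.
End PhiSec.
Section Seq.
Variable R : realType.

Lemma bnd01 (u : R^nat) : (forall n, 0 <= u n <= 1) -> bounded_fun u.
Proof.
move=> hu; rewrite /bounded_fun /bounded_near; near=> M => n /= _.
have /andP [u0 u1] := hu n; rewrite ger0_norm //; apply: le_trans u1 _.
near: M; apply: nbhs_pinfty_ge; exact: num_real.
Unshelve. all: by end_near.
Qed.

Lemma ev_ge (n0 : nat) : \forall n \near \oo, (n0 <= n)%N.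
Proof. by exists n0. Qed.

Lemma limsup_lt (u : R^nat) (q : R) : (forall n, 0 <= u n <= 1) ->
  limn_sup u < q -> \forall n \near \oo, u n < q.
Proof.
move=> hu; rewrite limn_supE; last exact: bnd01.
case/inf_lt; first by exists (sups u 0); exists 0%N.
move=> _ [n0 _ <-] h; apply: filterS (ev_ge n0) => n nn0.
apply: le_lt_trans h; rewrite /sups /=; apply: ub_le_sup; last by exists n.
apply: has_ubound_sdrop; exists 1 => _ [k _ <-]; by case/andP: (hu k).
Qed.

Lemma liminf_gt (u : R^nat) : (forall n, 0 <= u n <= 1) ->
  0 < limn_inf u -> exists2 d : R, 0 < d & \forall n \near \oo, d <= u n.
Proof.
move=> hu; rewrite limn_infE; last exact: bnd01.
case/sup_gt; first by exists (infs u 0); exists 0%N.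
move=> _ [n0 _ <-] h; exists (infs u n0) => //; apply: filterS (ev_ge n0) => n nn0.
rewrite /infs /=; apply: ge_inf; last by exists n.
apply: has_lbound_sdrop; exists 0 => _ [k _ <-]; by case/andP: (hu k).
Qed.

Lemma grid_find (f : nat -> R) (z : R) (M : nat) :
  f 0%N < z -> z <= f M -> exists j, (j < M)%N /\ f j < z <= f j.+1.
Proof.
elim: M => [|M IH] f0 fM; first by move: (lt_le_trans f0 fM); rewrite ltxx.
case: (ltP (f M) z) => h.
  by exists M; rewrite ltnSn h fM.
by have [j [jM hj]] := IH f0 h; exists j; rewrite (ltn_trans jM).
Qed.
End Seq.

Theorem lemma6p1 (R : realType) (k : nat) (H : rel 'I_k) :
  simple_graph H -> connected_graph H ->
  (* (a): c depends only on H and on limsup p_n *)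
  (exists c : R -> R,
    forall (m : nat -> nat) (G : forall n, rel 'I_(m n)) (p : nat -> R),
      (forall n, simple_graph (G n)) ->
      (forall n, 0 < Ncount R H (G n)) ->
      (forall n, 0 < p n < 1) ->
      limn_sup p < 1 ->
      0 < c (limn_sup p) /\
      \forall n \near \oo,
        expR (- (c (limn_sup p) * p n ^+ k * Ncount R H (G n)))
          <= Prob (p n) (fun w => Tcount R H (G n) w == 0))
  /\
  (* (b) *)
  (forall (m : nat -> nat) (G : forall n, rel 'I_(m n)) (p : nat -> R),
      (forall n, simple_graph (G n)) ->
      (forall n, 0 < Ncount R H (G n)) ->
      (forall n, 0 < p n < 1) ->
      limn_sup p < 1 ->
      0 < limn_inf (fun n => Prob (p n) (fun w => Tcount R H (G n) w == 0)) ->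
      ~ consistent H G p /\ ~ asymp_normal H G p).
Proof.
move=> sH [k0 _].
have aut0 : 0 < (autH H)%:R :> R by rewrite ltr0n autH_gt0.
split.
  exists (fun L => (autH H)%:R / (1 - (Num.max 0 ((1 + L) / 2)) ^+ k)).
  move=> m G p sG Npos pb Lsup.
  set L := limn_sup p in Lsup *; set q := Num.max 0 ((1 + L) / 2).
  have q0 : 0 <= q by rewrite le_max lexx.
  have qL : L < q by rewrite lt_max; apply/orP; right; lra.
  have q1 : q < 1 by rewrite gt_max ltr01 /=; lra.
  have qk1 : q ^+ k < 1 by rewrite exprn_ilt1 // -lt0n.
  split; first by rewrite divr_gt0 // subr_gt0.
  have pb' : forall n, 0 <= p n <= 1.
    by move=> n; case/andP: (pb n) => a b; rewrite !ltW.
  have ev := limsup_lt _ _ _ pb' qL.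
  near=> n.
  have pnq : p n < q by near: n; exact: ev.
  have /andP [pn0 pn1] := pb n.
  have pk1 : p n ^+ k < 1 by rewrite exprn_ilt1 ?ltW // -lt0n.
  apply: le_trans (bound_a _ _ H _ (G n) _ (ltW pn0) pk1 (ltW pn1)).
  rewrite ler_expR lerN2.
  have Np := Npos n.
  have pkq : p n ^+ k <= q ^+ k by rewrite lerXn2r // ?nnegrE ltW.
  apply: ler_wpM2r; first exact: ltW.
  rewrite mulrAC; apply: ler_wpM2r; first by rewrite exprn_ge0 // ltW.
  apply: ler_wpM2l; first exact: ltW.
  rewrite lef_pV2 ?posrE ?subr_gt0 //.
  by rewrite lerB.
move=> m G p sG Npos pb Lsup Linf.
have pb' : forall n, 0 <= p n <= 1.
  by move=> n; case/andP: (pb n) => a b; rewrite !ltW.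
set P0 := fun n => Prob (p n) (fun w => Tcount R H (G n) w == 0).
have P01 : forall n, 0 <= P0 n <= 1.
  move=> n; have /andP [a b] := pb' n.
  rewrite Prob_ge0 //= -(@Prob_total R (m n) (p n)); apply: Prob_le => //.
have [d d0 evd] := liminf_gt _ P0 P01 Linf.
split.
  move=> cons.
  have cv := cons (1/2) (ltac:(lra)).
  have ev2 := cvgr0_norm_lt _ cv _ d0.
  suff : \forall n \near \oo, False by case/filter_ex.
  near=> n.
  have h1 : d <= P0 n by near: n; exact: evd.
  have h2 : `|Prob (p n) (fun w => 1 / 2 < `|Nhat H (G n) (p n) w / Ncount R H (G n) - 1|)| < d.
    by near: n; exact: ev2.
  have /andP [a b] := pb' n.
  have h3 : P0 n <= Prob (p n) (fun w => 1 / 2 < `|Nhat H (G n) (p n) w / Ncount R H (G n) - 1|).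
    apply: Prob_le => // w /eqP T0; rewrite /Nhat T0 mulr0 mul0r sub0r normrN normr1.
    lra.
  move: h2; rewrite ger0_norm ?Prob_ge0 // => h2; lra.
move=> an.
set B := 1 + d^-1.
set h := d / 4.
have h0 : 0 < h by rewrite divr_gt0.
have B1 : 1 <= B by rewrite lerDl invr_ge0 ltW.
set M := Num.Def.archi_bound (2 * B / h).
have hM : 2 * B / h < M%:R.
  by apply: archi_boundP; apply: divr_ge0; [apply: mulr_ge0 => //; exact: (le_trans ler01 B1)|exact: ltW].
set x := fun j : nat => - B + j%:R * h.
have xS : forall j, x j.+1 = x j + h by move=> j; rewrite /x -natr1 mulrDl mul1r addrA.
pose F n y := Prob (p n) (fun w => Zstat H (G n) (p n) w <= y).
have evg : \forall n \near \oo, forall j : 'I_M.+1, `|Phi (x j) - F n (x j)| < h.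
  apply: filter_forall => j; exact: (cvgr_dist_lt _ _ (an (x j)) _ h0).
suff : \forall n \near \oo, False by case/filter_ex.
near=> n.
have h1 : d <= P0 n by near: n; exact: evd.
have h2 : forall j : 'I_M.+1, `|Phi (x j) - F n (x j)| < h by near: n; exact: evg.
have /andP [a b] := pb' n.
set z := (0 - p n ^+ k * Ncount R H (G n)) / Num.sqrt (Variance (p n) (Tcount R H (G n))).
have zb : z ^+ 2 * P0 n <= 1 by apply: zbound.
have zd : z ^+ 2 * d <= 1.
  apply: le_trans zb; apply: ler_wpM2l => //; exact: sqr_ge0.
have Bd : B * d = d + 1 by rewrite /B mulrDl mul1r mulVf ?gt_eqF.
have zB2 : z ^+ 2 < B ^+ 2 by nra.
have zlt : - B < z < B by apply/andP; split; nra.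
case/andP: zlt => zl zr.
have xM : z <= x M.
  rewrite /x; apply: ltW; apply: (lt_le_trans zr).
  have : 2 * B < M%:R * h by rewrite -ltr_pdivrMr.
  lra.
have [j [jM [hj1 hj2]]] : exists j, (j < M)%N /\ x j < z /\ z <= x j.+1.
  have x0 : x 0%N < z by rewrite /x mul0r addr0.
  have [j [jM /andP [u v]]] := grid_find _ x z M x0 xM.
  by exists j.
have hd := Prob_diff _ _ (p n) a b (Zstat H (G n) (p n))
  (fun w => Tcount R H (G n) w == 0) (x j) (x j.+1) (ltW (lt_le_trans hj1 hj2)).
have : P0 n <= F n (x j.+1) - F n (x j).
  apply: hd => w /eqP T0; rewrite /Zstat T0 -/z; by rewrite hj1 hj2.
have e1 := h2 (Ordinal (ltn_trans jM (ltnSn M))).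
have e2 := h2 (Ordinal (jM : (j.+1 < M.+1)%N)).
move: e1 e2; rewrite /= !ltr_norml => /andP [e1 e1'] /andP [e2 e2'].
have := Phi_lip _ (x j) (x j.+1) (ltW (lt_le_trans hj1 hj2)).
rewrite xS in e2 e2' *; move=> hl hp; rewrite /h in h0 e1 e1' e2 e2' hl hp.
lra.
Unshelve. all: by end_near.
Qed.
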